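(* Let $m,n,N$ be positive integers and for each $1\le i\le 2m$ let $\mathbf{x}^{(i)}=(\mathbf{x}^{(i)}_1,\dots,\mathbf{x}^{(i)}_n)$ be a sequence of $n$ variables. Then $$\sum_{\substack{\lambda:\ \ell(\lambda)\le n\\ \lambda_1\le N}}s_\lambda(\mathbf{x}^{(1)})s_\lambda(\mathbf{x}^{(2)})\cdots s_\lambda(\mathbf{x}^{(2m)})=\prod_{i=1}^{2m}\frac{1}{V(\mathbf{x}^{(i)})}\cdot\mathrm{Det}^{[2m]}\left(\frac{1-(\mathbf{x}^{(1)}_{i_1}\cdots\mathbf{x}^{(2m)}_{i_{2m}})^{n+N}}{1-\mathbf{x}^{(1)}_{i_1}\cdots\mathbf{x}^{(2m)}_{i_{2m}}}\right)_{1\le i_1,\dots,i_{2m}\le n},$$ the sum being over all partitions $\lambda$ with at most $n$ parts and largest part at most $N$.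
   Context: $V(\mathbf{x})=\prod_{1\le i<j\le n}(\mathbf{x}_i-\mathbf{x}_j)$ is the Vandermonde product; $s_\lambda(\mathbf{x})=\det(\mathbf{x}_i^{\lambda_j+n-j})_{1\le i,j\le n}/V(\mathbf{x})$ is the Schur polynomial in $n$ variables. Each entry $\frac{1-y^{n+N}}{1-y}$ means the polynomial $\sum_{k=0}^{n+N-1}y^k$. Hyperdeterminant: $\mathrm{Det}^{[2m]}(A):=\frac{1}{n!}\sum_{\sigma_1,\dots,\sigma_{2m}\in\mathfrak{S}_n}\mathrm{sgn}(\sigma_1)\cdots\mathrm{sgn}(\sigma_{2m})\prod_{i=1}^nA(\sigma_1(i),\dots,\sigma_{2m}(i))$. *)

(* Defs.v *)
From HB Require Import structures.
From mathcomp Require Import all_boot all_order all_algebra all_fingroup.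
Set Implicit Arguments. Unset Strict Implicit. Unset Printing Implicit Defensive.
Import GRing.Theory.
Local Open Scope ring_scope.

Definition vandermonde (F : fieldType) (n : nat) (x : 'I_n -> F) : F :=
  \prod_(i < n) \prod_(j < n | (i < j)%N) (x i - x j).

(* A partition with at most n parts and largest part at most N is encoded as a
   nonincreasing function lam : 'I_n -> 'I_N.+1 (parts lam_0 >= ... >= lam_{n-1},
   zero parts allowed). *)
Definition is_partition (n N : nat) (lam : {ffun 'I_n -> 'I_N.+1}) : bool :=
  [forall i : 'I_n, forall j : 'I_n, (i <= j)%N ==> (lam j <= lam i)%N].

(* Schur polynomial (evaluated): det (x_i^(lam_j + n - j)) / V(x), with the
   1-based exponent lam_j + n - j written 0-based as lam_j + (n - 1 - j). *)
Definition schur (F : fieldType) (n N : nat) (lam : {ffun 'I_n -> 'I_N.+1})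
    (x : 'I_n -> F) : F :=
  \det (\matrix_(i < n, j < n) x i ^+ (lam j + (n - 1 - j))%N) / vandermonde x.

Definition hyperdet (F : fieldType) (m n : nat) (A : ('I_(2 * m) -> 'I_n) -> F) : F :=
  (n`!%:R)^-1 *
  \sum_(s : {ffun 'I_(2 * m) -> 'S_n})
     (\prod_(k < 2 * m) (-1) ^+ (s k : bool)) *
     \prod_(i < n) A (fun k => s k i).

(* Main.v *)
Require Import Defs.
From HB Require Import structures.
From mathcomp Require Import all_boot all_order all_algebra all_fingroup.
From mathcomp Require Import zify.
Set Implicit Arguments. Unset Strict Implicit. Unset Printing Implicit Defensive.
Import GRing.Theory.
Local Open Scope ring_scope.

Lemma card_lt n t : (t <= n)%N -> #|[pred a : 'I_n | (a < t)%N]| = t.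
Proof.
move=> h; rewrite -sum1_card.
rewrite (eq_bigl (fun a : 'I_n => true && (a < t)%N)) //.
by rewrite (big_ord_narrow_cond h) sum1_card card_ord.
Qed.

Section Rank.
Variable n : nat.
Implicit Types (k : 'I_n -> nat).

Definition ltk k (a b : 'I_n) := (k b < k a)%N || ((k a == k b) && (a < b)%N).

Lemma ltk_irr k a : ltk k a a = false.
Proof. by rewrite /ltk ltnn eqxx ltnn. Qed.

Lemma ltk_trans k a b c : ltk k a b -> ltk k b c -> ltk k a c.
Proof.
rewrite /ltk => /orP[h1|/andP[/eqP e1 h1]] /orP[h2|/andP[/eqP e2 h2]]; apply/orP.
- left; lia.
- left; lia.
- left; lia.
- right; apply/andP; split; [apply/eqP; lia | lia].
Qed.

Lemma ltk_total k a b : a != b -> ltk k a b || ltk k b a.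
Proof.
rewrite /ltk => hab.
have hne : (nat_of_ord a != nat_of_ord b) by [].
have [h|h|h] := ltngtP (k a) (k b); rewrite ?orbT //=.
have [h2|h2|h2] := ltngtP a b; rewrite ?orbT //.
by rewrite h2 eqxx in hne.
Qed.

Definition rk k (i : 'I_n) := #|[pred a | ltk k a i]|.

Lemma rk_lt k i : (rk k i < n)%N.
Proof.
rewrite /rk -[X in (_ < X)%N]card_ord -(cardC [pred a | ltk k a i]).
rewrite -[X in (X < _)%N]addn0 ltn_add2l.
apply/card_gt0P; exists i; by rewrite !inE /= ltk_irr.
Qed.

Lemma rk_mono k a b : ltk k a b -> (rk k a < rk k b)%N.
Proof.
move=> hab; apply: proper_card; apply/properP; split.
- apply/subsetP => c; rewrite !inE => hc; exact: ltk_trans hc hab.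
- by exists a; rewrite !inE // ltk_irr.
Qed.

Definition rkf k (i : 'I_n) : 'I_n := Ordinal (rk_lt k i).

Lemma rkf_inj k : injective (rkf k).
Proof.
move=> a b /(congr1 val) /= e; apply/eqP; apply/negPn/negP => hab.
case/orP: (ltk_total k hab) => /rk_mono; rewrite e ltnn //.
Qed.

Definition tau k : 'S_n := perm (@rkf_inj k).
End Rank.

Section Sort.
Variables n p : nat.
Definition dec (mu : {ffun 'I_n -> 'I_p}) :=
  [forall i : 'I_n, forall j : 'I_n, (i < j)%N ==> (mu j < mu i)%N].
Definition kn (ka : {ffun 'I_n -> 'I_p}) : 'I_n -> nat := fun i => ka i.

Lemma decP mu : dec mu -> forall i j : 'I_n, (i < j)%N -> (mu j < mu i)%N.
Proof. by move=> /forallP h i j hij; move: (h i) => /forallP /(_ j) /implyP; apply. Qed.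

Lemma dec_ltE mu : dec mu -> forall i j : 'I_n, (mu j < mu i)%N = (i < j)%N.
Proof.
move=> d i j; have [h|h|h] := ltngtP i j.
- exact: decP.
- by apply/negbTE; rewrite -leqNgt ltnW // decP.
- have -> : i = j by apply: val_inj.
  by rewrite ltnn.
Qed.

Lemma dec_inj mu : dec mu -> injective mu.
Proof.
move=> d i j e; apply/eqP; apply/negPn/negP => hij.
have [h|h|h] := ltngtP i j.
- by move: (decP d h); rewrite e ltnn.
- by move: (decP d h); rewrite e ltnn.
- by move/val_inj: h => h; rewrite h eqxx in hij.
Qed.

Lemma tau_dec (ka : {ffun 'I_n -> 'I_p}) mu (t : 'S_n) : dec mu -> (forall i, ka i = mu (t i)) -> tau (kn ka) = t.
Proof.
move=> d e; apply/permP => i; rewrite permE; apply: val_inj => /=.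
rewrite /rk.
have -> : #|[pred a | ltk (kn ka) a i]| = #|t @^-1: [set b : 'I_n | (b < t i)%N]|.
  apply: eq_card => a; rewrite !inE /ltk /kn !e dec_ltE //.
  case: (ltnP (t a) (t i)) => //= h.
  apply/negbTE/negP => /andP[/eqP h1 h2].
  have ha : a = i by apply: (perm_inj (s:=t)); apply: (dec_inj d); apply: val_inj.
  by rewrite ha ltnn in h2.
rewrite card_preimset; last exact: perm_inj.
rewrite cardsE; apply: card_lt; exact: ltnW.
Qed.

Lemma dec_sorted (ka : {ffun 'I_n -> 'I_p}) : injective ka ->
  dec [ffun a => ka ((tau (kn ka))^-1%g a)].
Proof.
move=> hi; apply/forallP => a; apply/forallP => b; apply/implyP => hab; rewrite !ffunE.
set i := (tau (kn ka))^-1%g a; set j := (tau (kn ka))^-1%g b.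
have ri : rk (kn ka) i = a by have := congr1 val (permKV (tau (kn ka)) a); rewrite permE.
have rj : rk (kn ka) j = b by have := congr1 val (permKV (tau (kn ka)) b); rewrite permE.
have hij : i != j.
  apply/negP => /eqP e; move: rj; rewrite -e ri => e2.
  by move: hab; rewrite e2 ltnn.
case/orP: (ltk_total (kn ka) hij) => /[dup] hl /rk_mono; rewrite ri rj.
- move=> _; move: hl; rewrite /ltk /kn => /orP[//|/andP[/eqP e _]].
  by exfalso; move/negP: hij; apply; apply/eqP; apply: hi; apply: val_inj.
- by move=> h; exfalso; move: (ltn_trans h hab); rewrite ltnn.
Qed.

Lemma sum_sort (R : nmodType) (G : {ffun 'I_n -> 'I_p} -> R) :
  (forall ka : {ffun 'I_n -> 'I_p}, ~~ injectiveb ka -> G ka = 0) ->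
  (forall (mu : {ffun 'I_n -> 'I_p}) (t : 'S_n), G [ffun i => mu (t i)] = G mu) ->
  \sum_ka G ka = (\sum_(mu | dec mu) G mu) *+ n`!.
Proof.
move=> G0 Gi.
rewrite (bigID (fun ka : {ffun 'I_n -> 'I_p} => injectiveb ka)) /=.
rewrite [X in _ + X]big1 ?addr0; last by move=> ka; apply: G0.
pose h (j : 'S_n * {ffun 'I_n -> 'I_p}) := [ffun i => j.2 (j.1 i)].
pose h' (ka : {ffun 'I_n -> 'I_p}) :=
  (tau (kn ka), [ffun a => ka ((tau (kn ka))^-1%g a)]).
rewrite (reindex_onto h h'); last first.
  by move=> ka _; apply/ffunP => i; rewrite !ffunE permK.
rewrite (eq_bigl (fun j => true && dec j.2)); last first.
  move=> [t mu] /=; apply/idP/idP.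
  - case/andP => /injectiveP hi /eqP e.
    have -> : mu = (h' (h (t, mu))).2 by rewrite e.
    exact: dec_sorted.
  - move=> d.
    have hinj : injective (h (t, mu)).
      move=> a b; rewrite !ffunE /= => /(dec_inj d); exact: perm_inj.
    have -> : injectiveb (h (t, mu)) by apply/injectiveP.
    apply/eqP.
    rewrite /h' (@tau_dec _ mu t) //; last by move=> i; rewrite ffunE.
    congr (_, _); apply/ffunP => a; rewrite !ffunE /= permKV.
    by [].
rewrite (eq_bigr (fun j => G j.2)); last by move=> [t mu] _; apply: Gi.
rewrite -(pair_big_dep xpredT (fun _ mu => dec mu) (fun _ mu => G mu)) /=.
rewrite sumr_const card_Sn.
by [].
Qed.
End Sort.

Lemma chain n p (mu : {ffun 'I_n -> 'I_p}) : dec mu ->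
  forall i j : 'I_n, (i <= j)%N -> (mu j + (j - i) <= mu i)%N.
Proof.
move=> d.
have H : forall dd i0, (i0 + dd < n)%N -> forall a b : 'I_n,
    nat_of_ord a = (i0 + dd)%N -> nat_of_ord b = i0 -> (mu a + dd <= mu b)%N.
  elim=> [|dd IH] i0 h a b ea eb.
    have -> : a = b by apply: val_inj => /=; lia.
    by rewrite addn0.
  have hc : (i0 + dd < n)%N by lia.
  have := IH i0 hc (Ordinal hc) b erefl eb.
  have : (mu a < mu (Ordinal hc))%N by apply: decP => //=; lia.
  lia.
move=> i j hij; apply: (H (j - i)%N i) => //; [|lia]. 
have := ltn_ord j; lia.
Qed.

Definition Mx (F : comPzRingType) n (y : 'I_n -> F) (k : 'I_n -> nat) : 'M[F]_n :=
  \matrix_(i, a) y a ^+ k i.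

Lemma hyper_expand (F : fieldType) m n p (x : 'I_(2 * m) -> 'I_n -> F) :
  hyperdet (fun idx : 'I_(2 * m) -> 'I_n =>
      \sum_(k < p) (\prod_(l < 2 * m) x l (idx l)) ^+ k)
  = (n`!%:R)^-1 * \sum_(ka : {ffun 'I_n -> 'I_p})
       \prod_(l < 2 * m) \det (Mx (x l) (kn ka)).
Proof.
rewrite /hyperdet; congr (_ * _).
transitivity (\sum_(s : {ffun 'I_(2 * m) -> 'S_n}) \sum_(ka : {ffun 'I_n -> 'I_p})
   (\prod_(k < 2 * m) (-1) ^+ (s k : bool)) *
   \prod_(l < 2 * m) \prod_(i < n) x l (s l i) ^+ ka i).
  apply: eq_bigr => s _; rewrite bigA_distr_bigA mulr_sumr; apply: eq_bigr => ka _.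
  congr (_ * _); rewrite exchange_big /=; apply: eq_bigr => i _.
  by rewrite prodrXl.
rewrite exchange_big /=; apply: eq_bigr => ka _.
rewrite /determinant.
rewrite bigA_distr_bigA /=; apply: eq_bigr => s _.
rewrite big_split /=; congr (_ * _); apply: eq_bigr => l _.
by apply: eq_bigr => i _; rewrite mxE.
Qed.

Section Main.
Variables (F : fieldType) (m n N : nat).
Hypotheses (hm : (0 < m)%N) (hn : (0 < n)%N).
Variable x : 'I_(2 * m) -> 'I_n -> F.

Definition G (ka : {ffun 'I_n -> 'I_(n + N)}) :=
  \prod_(l < 2 * m) \det (Mx (x l) (kn ka)).

Lemma G0 (ka : {ffun 'I_n -> 'I_(n + N)}) : ~~ injectiveb ka -> G ka = 0.
Proof.
case/injectivePn => i [j hij e].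
have l0 : 'I_(2 * m) by exists 0%N; rewrite muln_gt0.
rewrite /G (bigD1 l0) //= (@determinant_alternate _ _ _ i j) ?mul0r //.
by move=> a; rewrite !mxE /kn e.
Qed.

Lemma Gi (mu : {ffun 'I_n -> 'I_(n + N)}) (t : 'S_n) : G [ffun i => mu (t i)] = G mu.
Proof.
rewrite /G.
have -> : \prod_(l < 2 * m) \det (Mx (x l) (kn [ffun i => mu (t i)]))
   = \prod_(l < 2 * m) ((-1) ^+ t * \det (Mx (x l) (kn mu))).
  apply: eq_bigr => l _.
  have -> : Mx (x l) (kn [ffun i => mu (t i)]) = row_perm t (Mx (x l) (kn mu)).
    by apply/matrixP => i a; rewrite !mxE /kn ffunE.
  by rewrite row_permE det_mulmx det_perm.
rewrite big_split /= prodr_const card_ord exprM sqrr_sign expr1n mul1r.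
by [].
Qed.
End Main.

Section Reidx.
Variables (n N : nat).
Hypothesis hn : (0 < n)%N.
Let d0 : 'I_(n + N) := Ordinal (ltn_addr N hn).
Definition phi (lam : {ffun 'I_n -> 'I_N.+1}) : {ffun 'I_n -> 'I_(n + N)} :=
  [ffun j => insubd d0 (lam j + (n - 1 - j))%N].
Definition psi (mu : {ffun 'I_n -> 'I_(n + N)}) : {ffun 'I_n -> 'I_N.+1} :=
  [ffun j => inord (mu j - (n - 1 - j))%N].

Lemma phiE lam j : nat_of_ord (phi lam j) = (lam j + (n - 1 - j))%N.
Proof.
rewrite ffunE val_insubd.
have h1 := ltn_ord (lam j); have h2 := ltn_ord j.
have -> : (lam j + (n - 1 - j) < n + N)%N by lia.
by [].
Qed.

Lemma psiphi lam : psi (phi lam) = lam.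
Proof.
apply/ffunP => j; rewrite ffunE; apply: val_inj => /=; rewrite phiE.
have h1 := ltn_ord (lam j).
rewrite inordK; lia.
Qed.

Lemma dec_phi lam : is_partition lam -> dec (phi lam).
Proof.
move=> /forallP hp; apply/forallP => i; apply/forallP => j; apply/implyP => hij.
rewrite !phiE.
have := hp i => /forallP /(_ j) /implyP /(_ (ltnW hij)).
have := ltn_ord j; lia.
Qed.

Lemma dec_bounds (mu : {ffun 'I_n -> 'I_(n + N)}) : dec mu -> forall j : 'I_n,
  (n - 1 - j <= mu j)%N /\ (mu j - (n - 1 - j) <= N)%N.
Proof.
move=> d j.
have hl : (n - 1 < n)%N by lia.
have hle : (j <= n - 1)%N by have := ltn_ord j; lia.
have c1 := @chain n (n + N) mu d j (Ordinal hl) hle.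
have h0 : (0 < n)%N := hn.
have c2 := @chain n (n + N) mu d (Ordinal h0) j (leq0n _).
have := ltn_ord (mu (Ordinal h0)).
move: c1 c2 => /= c1 c2.
split; lia.
Qed.

Lemma dec_iff (mu : {ffun 'I_n -> 'I_(n + N)}) : is_partition (psi mu) && (phi (psi mu) == mu) = dec mu.
Proof.
apply/idP/idP.
- case/andP => hp /eqP e; rewrite -e; exact: dec_phi.
- move=> d; apply/andP; split.
  + apply/forallP => i; apply/forallP => j; apply/implyP => hij.
    rewrite !ffunE.
    have [b1 b2] := dec_bounds d i; have [b3 b4] := dec_bounds d j.
    rewrite !inordK; [|lia|lia].
    have := chain d hij; lia.
  + apply/eqP/ffunP => j; apply: val_inj => /=; rewrite phiE ffunE.
    have [b1 b2] := dec_bounds d j.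
    rewrite inordK; lia.
Qed.
End Reidx.

Unset Implicit Arguments.
Theorem theorem3p1 (F : fieldType) (hchar : [pchar F] =i pred0)
    (m n N : nat) (hm : (0 < m)%N) (hn : (0 < n)%N) (hN : (0 < N)%N)
    (x : 'I_(2 * m) -> 'I_n -> F)
    (hV : forall l : 'I_(2 * m), vandermonde (x l) != 0) :
  \sum_(lam : {ffun 'I_n -> 'I_N.+1} | is_partition lam)
      \prod_(l < 2 * m) schur lam (x l)
  = (\prod_(l < 2 * m) (vandermonde (x l))^-1) *
    hyperdet (fun idx : 'I_(2 * m) -> 'I_n =>
      \sum_(k < n + N) (\prod_(l < 2 * m) x l (idx l)) ^+ k).
Proof.
have LHS : \sum_(lam : {ffun 'I_n -> 'I_N.+1} | is_partition lam)
      \prod_(l < 2 * m) schur lam (x l) =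
   (\prod_(l < 2 * m) (vandermonde (x l))^-1) *
   \sum_(lam : {ffun 'I_n -> 'I_N.+1} | is_partition lam)
      \prod_(l < 2 * m) \det (Mx (x l) (fun j => (lam j + (n - 1 - j))%N)).
  rewrite mulr_sumr; apply: eq_bigr => lam _.
  rewrite /schur big_split /= mulrC; congr (_ * _); apply: eq_bigr => l _.
  rewrite -det_tr; congr (\det _); apply/matrixP => i j; by rewrite !mxE.
rewrite LHS hyper_expand.
rewrite (sum_sort (@G0 F m n N hm x) (@Gi F m n N x)).
congr (_ * _).
have hf : (n`!%:R : F) != 0 by rewrite ((pcharf0P F).1 hchar) -lt0n fact_gt0.
rewrite mulrC -[(\sum_(mu | _) _) *+ _]mulr_natr mulfK //.
rewrite (reindex_onto (@psi n N) (@phi n N hn)); last by move=> lam _; apply: psiphi.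
apply: eq_big => [mu|mu /andP[hp /eqP e]]; first exact: dec_iff.
apply: eq_bigr => l _; congr (\det _); apply/matrixP => i a; rewrite !mxE /kn.
congr (_ ^+ _); rewrite -[in RHS]e; by rewrite phiE.
Qed.
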